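(* Let $G^\sigma$ be an oriented graph whose underlying graph $G$ is a simple connected graph with $n$ vertices and $m$ edges. Then $$\frac{sr(G^\sigma)}{\alpha(G)}\geqslant \frac{4(2n-m-1)}{\sqrt{4n(n-1)-8m+1}+1}-2,$$ with equality if and only if $G\cong S_n$ or $G\cong C_3$.
   Context: An oriented graph $G^\sigma$ is obtained from a simple graph $G$ by assigning a direction to each edge. Its skew-adjacency matrix $S(G^\sigma)=[s_{x,y}]$ has $s_{x,y}=1$ if there is an arc from $x$ to $y$, $s_{x,y}=-1$ if there is an arc from $y$ to $x$, and $0$ otherwise; the skew-rank $sr(G^\sigma)$ is the rank of $S(G^\sigma)$. $\alpha(G)$ is the independence number of $G$. $S_n$ denotes the star on $n$ vertices (the single vertex when $n=1$) and $C_3$ the triangle. *)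

(* Defs.v *)
From HB Require Import structures.
From mathcomp Require Import all_boot all_order all_algebra.
Set Implicit Arguments. Unset Strict Implicit. Unset Printing Implicit Defensive.
Import Order.TTheory GRing.Theory Num.Theory.

Definition simple_graph (n : nat) (e : rel 'I_n) : Prop :=
  (forall x, ~~ e x x) /\ (forall x y, e x y = e y x).

(* connected (in the usual sense, vertex set assumed nonempty separately) *)
Definition connected_graph (n : nat) (e : rel 'I_n) : Prop :=
  forall x y, connect e x y.

Definition num_edges (n : nat) (e : rel 'I_n) : nat :=
  #|[set p : 'I_n * 'I_n | (p.1 < p.2)%N && e p.1 p.2]|.

Definition independent (n : nat) (e : rel 'I_n) (S : {set 'I_n}) : bool :=
  [forall x in S, forall y in S, ~~ e x y].

Definition alpha (n : nat) (e : rel 'I_n) : nat :=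
  \max_(S : {set 'I_n} | independent e S) #|S|.

Definition orientation (n : nat) (e : rel 'I_n) (o : rel 'I_n) : Prop :=
  forall x y, (o x y -> e x y) /\ (e x y -> o x y (+) o y x).

Definition skew_adj (R : pzRingType) (n : nat) (o : rel 'I_n) : 'M[R]_n :=
  \matrix_(i, j) ((o i j)%:R - (o j i)%:R)%R.

Definition skew_rank (R : fieldType) (n : nat) (o : rel 'I_n) : nat :=
  \rank (skew_adj R o).

Definition graph_iso (n k : nat) (e : rel 'I_n) (e' : rel 'I_k) : Prop :=
  exists f : 'I_n -> 'I_k, bijective f /\ forall x y, e x y = e' (f x) (f y).

Definition star_rel (k : nat) : rel 'I_k :=
  fun x y => (x != y) && ((val x == 0%N) || (val y == 0%N)).

Definition triangle_rel : rel 'I_3 := fun x y => x != y.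

(* Main.v *)
Require Import Defs.
From HB Require Import structures.
From mathcomp Require Import all_boot all_order all_algebra zify ring lra.
Import Order.TTheory GRing.Theory Num.Theory.
Local Open Scope ring_scope.

Lemma real_main (R : rcfType) (N M a s : R) :
  1 <= a -> 0 <= s -> 2 * M + a ^+ 2 + N <= N ^+ 2 + a ->
  4 * N <= s + 2 * a + 2 * M + 2 ->
  let t := Num.sqrt (4 * N * (N - 1) - 8 * M + 1) in
  4 * (2 * N - M - 1) / (t + 1) - 2 <= s / a /\
  (s / a = 4 * (2 * N - M - 1) / (t + 1) - 2 ->
     2 * M + a ^+ 2 + N = N ^+ 2 + a /\ s + 2 * a + 2 * M + 2 = 4 * N).
Proof.
move=> a1 s0 F1 F2 t.
have D0 : 0 <= 4 * N * (N - 1) - 8 * M + 1 by nra.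
have t0 : 0 <= t by apply: sqrtr_ge0.
have tt : t ^+ 2 = 4 * N * (N - 1) - 8 * M + 1 by apply: sqr_sqrtr.
have ta : 2 * a - 1 <= t by nra.
set q := 2 * N - M - 1.
have qE : q = 2 * N - M - 1 by [].
have a0 : a != 0 by apply/eqP => a0; move: a1; rewrite a0; lra.
have t10 : t + 1 != 0 by apply/eqP => h; lra.
have key : s / a - (4 * q / (t + 1) - 2) =
   (s * (t + 1) - 4 * q * a + 2 * (t + 1) * a) / (a * (t + 1)).
  by field; rewrite a0 t10.
have den : 0 < a * (t + 1) by apply: mulr_gt0; lra.
have numpos : 0 <= s * (t + 1) - 4 * q * a + 2 * (t + 1) * a.
  case: (lerP 0 q) => q0.
    have h1 : 0 <= (s - (2 * q - 2 * a)) * (t + 1) by apply: mulr_ge0; lra.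
    have h2 : 0 <= q * (t + 1 - 2 * a) by apply: mulr_ge0; lra.
    nra.
  have h1 : 0 <= s * (t + 1) by apply: mulr_ge0; lra.
  have h2 : 0 <= (t + 1) * a by apply: mulr_ge0; lra.
  have h3 : 0 <= - q * a by apply: mulr_ge0; lra.
  nra.
split.
  rewrite -subr_ge0 key; apply: divr_ge0 => //; lra.
move=> /eqP; rewrite -subr_eq0 key mulf_eq0 invr_eq0 (negbTE (lt0r_neq0 den)) orbF.
move=> /eqP num0.
have q0 : 0 < q.
  rewrite ltNge; apply/negP => q0.
  have h1 : 0 <= s * (t + 1) by apply: mulr_ge0; lra.
  have h2 : 0 < (t + 1) * a by apply: mulr_gt0; lra.
  have h3 : 0 <= - q * a by apply: mulr_ge0; lra.
  nra.
have h1 : 0 <= (s - (2 * q - 2 * a)) * (t + 1) by apply: mulr_ge0; lra.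
have h2 : 0 <= q * (t + 1 - 2 * a) by apply: mulr_ge0; lra.
have e1 : (s - (2 * q - 2 * a)) * (t + 1) = 0 by nra.
have e2 : q * (t + 1 - 2 * a) = 0 by nra.
move/eqP: e1; rewrite mulf_eq0 (negbTE t10) orbF subr_eq0 => /eqP e1.
move/eqP: e2; rewrite mulf_eq0 (negbTE (lt0r_neq0 q0)) /= subr_eq0 => /eqP e2.
have tv : t = 2 * a - 1 by lra.
rewrite tv in tt.
split; [nra | rewrite /q in e1; lra].
Qed.

Lemma real_conv (R : rcfType) (N M a s : R) :
  1 <= a -> 2 * M + a ^+ 2 + N = N ^+ 2 + a -> s + 2 * a + 2 * M + 2 = 4 * N ->
  s / a = 4 * (2 * N - M - 1) / (Num.sqrt (4 * N * (N - 1) - 8 * M + 1) + 1) - 2.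
Proof.
move=> a1 E1 E2.
have -> : 4 * N * (N - 1) - 8 * M + 1 = (2 * a - 1) ^+ 2 by nra.
rewrite sqrtr_sqr ger0_norm; last by lra.
have a0 : a != 0 by apply/eqP => a0; move: a1; rewrite a0; lra.
have -> : s = 4 * N - 2 * a - 2 * M - 2 by lra.
field; rewrite a0 andbT /=.
by apply/eqP => h; lra.
Qed.

Section Main.
Variables (R : rcfType) (n : nat) (e o : rel 'I_n).
Hypothesis eirr : forall x, ~~ e x x.
Hypothesis esy : forall x y, e x y = e y x.
Hypothesis Hor : orientation e o.

Fact A_key : unit. Proof. exact: tt. Qed.
Definition A := locked_with A_key (skew_adj R o).
Definition AU (U : {set 'I_n}) : 'M[R]_n :=
  \matrix_(i, j) (if (i \in U) && (j \in U) then A i j else 0).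
Definition srU U := \rank (AU U).

Lemma A_eq0 i j : (A i j == 0) = ~~ e i j.
Proof.
rewrite /A unlock /skew_adj mxE.
move: (Hor i j) (Hor j i); rewrite (esy j i).
case: (o i j); case: (o j i); case: (e i j) => /= -[h1 h2] [h3 h4];
  rewrite ?subrr ?eqxx ?subr0 ?sub0r ?oppr_eq0 ?oner_eq0 //;
  try by move: (h2 isT).
all: try by move: (h1 isT).
all: try by move: (h3 isT).
Qed.

Lemma A_anti i j : A j i = - A i j.
Proof. by rewrite /A unlock /skew_adj !mxE opprB. Qed.

Lemma A_diag i : A i i = 0.
Proof. by apply/eqP; rewrite A_eq0 eirr. Qed.

Lemma srU_sub (U V : {set 'I_n}) : U \subset V -> (srU U <= srU V)%N.
Proof.
move=> sUV; rewrite /srU.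
pose d := \row_i ((i \in U)%:R : R).
have -> : AU U = diag_mx d *m AU V *m diag_mx d.
  apply/matrixP => i j; rewrite mul_mx_diag mul_diag_mx !mxE.
  case iU: (i \in U); case jU: (j \in U); rewrite /= ?mulr0 ?mul0r ?mulr1 ?mul1r //.
  by rewrite (subsetP sUV _ iU) (subsetP sUV _ jU).
apply: leq_trans (mxrankM_maxl _ _) _.
exact: mxrankM_maxr.
Qed.

Lemma srU_pendant (U : {set 'I_n}) x v : x \in U -> v \in U -> e x v ->
  (forall y, y \in U -> e x y -> y = v) ->
  (srU (U :\ x :\ v) + 2 <= srU U)%N.
Proof.
move=> xU vU exv xonly.
have xv : x != v by apply: contraTneq exv => ->; rewrite eirr.
set U' := U :\ x :\ v.
set M := AU U.
set X := AU U'.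
pose Y : 'M[R]_(1 + 1, n) := col_mx (row x M) (row v M).
have Axv : A x v != 0 by rewrite A_eq0 exv.
have Mxj j : M x j = if j == v then A x v else 0.
  rewrite /M mxE xU /=; case: eqP => [->|jv]; first by rewrite vU.
  case jU: (j \in U) => //; apply/eqP; rewrite A_eq0.
  by apply/negP => exj; apply: jv; apply: xonly.
have Mvx : M v x = - A x v by rewrite /M mxE vU xU A_anti.
have Mvv : M v v = 0 by rewrite /M mxE vU A_diag.
have keyY (b : 'rV_(1 + 1)) : (b *m Y) 0 x = 0 -> (b *m Y) 0 v = 0 -> b = 0.
  have mxE_add (P Q : 'rV[R]_n) j : (P + Q) 0 j = P 0 j + Q 0 j by rewrite mxE.
  have rE (c : 'rV[R]_1) i j : (c *m row i M) 0 j = c 0 0 * M i j.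
    by rewrite mxE big_ord1 [row _ _ _ _]mxE.
  rewrite -[b]hsubmxK mul_row_col !mxE_add !rE.
  rewrite !Mxj (negbTE xv) eqxx Mvv Mvx ?mulr0 ?add0r ?addr0 => h1 h2.
  have b2 : rsubmx b = 0.
    apply/matrixP => i j; rewrite (ord1 i) (ord1 j) [RHS]mxE.
    by move/eqP: h1; rewrite mulf_eq0 oppr_eq0 (negbTE Axv) orbF => /eqP ->.
  have b1 : lsubmx b = 0.
    apply/matrixP => i j; rewrite (ord1 i) (ord1 j) [RHS]mxE.
    by move/eqP: h2; rewrite mulf_eq0 (negbTE Axv) orbF => /eqP ->.
  by rewrite b1 b2 row_mx0.
have colX0 (a : 'rV[R]_n) j : j \notin U' -> (a *m X) 0 j = 0.
  move=> jU; rewrite mxE big1 // => k _.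
  by rewrite /X /AU mxE (negbTE jU) andbF mulr0.
have xU' : x \notin U' by rewrite !in_setD1 eqxx andbF.
have vU' : v \notin U' by rewrite !in_setD1 eqxx.
have XM : (X <= M)%MS.
  apply/submxP.
  pose c := \col_i (((i \in U')%:R : R) * M i v / A x v).
  pose d := \row_i ((i \in U')%:R : R).
  exists (diag_mx d - c *m delta_mx 0 x).
  rewrite mulmxBl -mulmxA -rowE mul_diag_mx.
  apply/matrixP => i j.
  rewrite /X /AU [M]lock !mxE big_ord1 !mxE -lock.
  rewrite vU andbT Mxj.
  case iU': (i \in U'); last by rewrite !mul0r subrr.
  move: (iU'); rewrite !in_setD1 => /and3P[iv ix iU].
  rewrite !mul1r /M /AU mxE iU /=.
  case: eqP => [->|/eqP jv].
    by rewrite /= vU divfK // subrr.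
  rewrite mulr0 subr0.
  case jx: (j == x).
    move/eqP: jx => ->; rewrite /= xU; apply/esym/eqP; rewrite A_eq0 esy.
    by apply/negP => /(xonly _ iU) /eqP; rewrite (negbTE iv).
  by [].
have YM : (Y <= M)%MS by rewrite col_mx_sub !row_sub.
have capY : (X :&: Y)%MS = 0.
  apply/eqP; rewrite -submx0; apply/rV_subP => w.
  rewrite sub_capmx submx0 => /andP[/submxP[a ->] /submxP[b wb]].
  rewrite wb (keyY b) ?mul0mx //; rewrite -wb colX0 //.
have rY : \rank Y = 2%N.
  apply/eqP; apply/inj_row_free => b Hb; apply: keyY; by rewrite Hb mxE.
rewrite /srU -/M -/X -rY -mxrank_disjoint_sum //; apply: mxrankS.
by rewrite addsmx_sub XM YM.
Qed.

Definition alU (U : {set 'I_n}) :=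
  (\max_(S : {set 'I_n} | (S \subset U) && independent e S) #|S|)%N.

Lemma indepP (S : {set 'I_n}) :
  reflect (forall x y, x \in S -> y \in S -> ~~ e x y) (independent e S).
Proof.
apply: (iffP forallP) => [H x y xS yS | H x].
  by move: (H x); rewrite xS /= => /forallP /(_ y); rewrite yS.
by apply/implyP => xS; apply/forallP => y; apply/implyP => yS; apply: H.
Qed.

Lemma alU_sub (U V : {set 'I_n}) : U \subset V -> (alU U <= alU V)%N.
Proof.
move=> sUV; apply/bigmax_leqP => S /andP[sSU iS]; apply: leq_bigmax_cond.
by rewrite iS (subset_trans sSU sUV).
Qed.

Lemma alU_ge (U S : {set 'I_n}) : S \subset U -> independent e S -> (#|S| <= alU U)%N.
Proof. by move=> sSU iS; apply: leq_bigmax_cond; rewrite sSU iS. Qed.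

Lemma alU_wit (U : {set 'I_n}) :
  exists S : {set 'I_n}, [/\ S \subset U, independent e S & #|S| = alU U].
Proof.
have : (0 < #|[pred S : {set 'I_n} | (S \subset U) && independent e S]|)%N.
  apply/card_gt0P; exists set0; rewrite inE sub0set /=.
  by apply/indepP => x y; rewrite inE.
move=> /(eq_bigmax_cond (fun S : {set 'I_n} => #|S|)) [S].
rewrite inE => /andP[sSU iS] HS; exists S; split => //.
Qed.

Lemma alU_pendant (U : {set 'I_n}) x v : x \in U -> v \in U ->
  (forall y, y \in U -> e x y -> y = v) ->
  (alU (U :\ x :\ v) + 1 <= alU U)%N.
Proof.
move=> xU vU xonly.
have [S [sS iS <-]] := alU_wit (U :\ x :\ v).
have xS : x \notin S.
  by apply/negP => /(subsetP sS); rewrite !in_setD1 eqxx andbF.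
have vS : v \notin S.
  by apply/negP => /(subsetP sS); rewrite !in_setD1 eqxx.
have SU : S \subset U.
  by apply/subsetP => y /(subsetP sS); rewrite !in_setD1 => /and3P[].
have -> : (#|S| + 1 = #|x |: S|)%N by rewrite cardsU1 xS add1n addn1.
rewrite alU_ge //.
  by rewrite subUset sub1set xU SU.
apply/indepP => a b; rewrite !in_setU1 => /predU1P[->|aS] /predU1P[->|bS].
- exact: eirr.
- apply/negP => /(xonly _ (subsetP SU _ bS)) bv.
  by move: vS; rewrite -bv bS.
- apply/negP; rewrite esy => /(xonly _ (subsetP SU _ aS)) av.
  by move: vS; rewrite -av aS.
- by move/indepP: iS; apply.
Qed.

Lemma forest_bound (U0 : {set 'I_n}) :
  (forall W : {set 'I_n}, W \subset U0 ->
     (exists x y, [/\ x \in W, y \in W & e x y]) ->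
     exists2 z, z \in W & #|[set y in W | e z y]| = 1%N) ->
  forall U : {set 'I_n}, U \subset U0 -> (2 * #|U| <= srU U + 2 * alU U)%N.
Proof.
move=> HF U.
have [k Hk] : exists k, (#|U| < k)%N by exists #|U|.+1.
elim: k U Hk => // k IH U HUk HU0.
case: (boolP [exists x in U, exists y in U, e x y]) => [/existsP[x /andP[xU /existsP[y /andP[yU exy]]]] | noE].
  have [z zU /eqP/cards1P[v Hv]] := HF U HU0 (ex_intro _ x (ex_intro _ y (And3 xU yU exy))).
  have : v \in [set y in U | e z y] by rewrite Hv set11.
  rewrite inE => /andP[vU ezv].
  have zonly : forall y, y \in U -> e z y -> y = v.
    by move=> w wU ezw; apply/set1P; rewrite -Hv inE wU ezw.
  have zv : z != v by apply: contraTneq ezv => ->; rewrite eirr.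
  have HU'0 : U :\ z :\ v \subset U0.
    by apply: subset_trans HU0; apply/subsetP => w; rewrite !in_setD1 => /and3P[].
  have cU : #|U| = (#|U :\ z :\ v| + 2)%N.
    rewrite (cardsD1 z U) zU (cardsD1 v (U :\ z)) in_setD1 eq_sym zv vU.
    by rewrite addnC add1n addn1 addn2.
  have := IH (U :\ z :\ v) _ HU'0.
  have := srU_pendant U z v zU vU ezv zonly.
  have := alU_pendant U z v zU vU zonly.
  rewrite cU in HUk *.
  move=> h1 h2 h3; have := h3 ltac:(lia); lia.
have iU : independent e U.
  apply/indepP => x y xU yU; apply/negP => exy; move/negP: noE; apply.
  by apply/existsP; exists x; rewrite xU; apply/existsP; exists y; rewrite yU.
have := alU_ge U U (subxx U) iU; lia.
Qed.

Section Tree.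
Variable r : 'I_n.
Hypothesis Hconn : connected_graph e.

Definition reach (x : 'I_n) (k : nat) : bool :=
  [exists p : k.-tuple 'I_n, path e r p && (last r p == x)].

Lemma reach_ex x : exists k, reach x k.
Proof.
have /connectP[p pp ->] := Hconn r x.
by exists (size p); apply/existsP; exists (in_tuple p); rewrite /= pp eqxx.
Qed.

Definition dist x := ex_minn (reach_ex x).

Lemma dist_min x k : reach x k -> (dist x <= k)%N.
Proof. by rewrite /dist; case: ex_minnP => m _ H; apply: H. Qed.

Lemma dist_reach x : reach x (dist x).
Proof. by rewrite /dist; case: ex_minnP. Qed.

Lemma dist_par {x : 'I_n} : x != r -> exists2 y, e x y & (dist y < dist x)%N.
Proof.
move=> xr; have /existsP[p /andP[pp /eqP lp]] := dist_reach x.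
have sp := size_tuple p.
move: pp lp sp; case/lastP: (tval p) => [|s z] /=.
  by move=> _ xe; move: xr; rewrite -xe eqxx.
rewrite rcons_path last_rcons size_rcons => /andP[ps ez] zx sz.
exists (last r s); first by rewrite esy -zx.
rewrite -sz ltnS; apply: dist_min; apply/existsP; exists (in_tuple s).
by rewrite /= ps eqxx.
Qed.

Definition par x := odflt x [pick y | e x y && (dist y < dist x)%N].

Lemma par_spec {x : 'I_n} : x != r -> e x (par x) && (dist (par x) < dist x)%N.
Proof.
move=> xr; rewrite /par; case: pickP => [y Hy|H] //=.
by have [y exy dy] := dist_par xr; move: (H y); rewrite exy dy.
Qed.

Definition Tt x y := ((x != r) && (y == par x)) || ((y != r) && (x == par y)).

Lemma Tt_sym x y : Tt x y = Tt y x.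
Proof. by rewrite /Tt orbC. Qed.

Lemma Tt_e x y : Tt x y -> e x y.
Proof.
case/orP => /andP[xr /eqP ->]; first by case/andP: (par_spec xr).
by rewrite esy; case/andP: (par_spec xr).
Qed.

Lemma Tt_forest (W : {set 'I_n}) :
  (exists x y, [/\ x \in W, y \in W & Tt x y]) ->
  exists2 z, z \in W & #|[set y in W | Tt z y]| = 1%N.
Proof.
move=> [x [y [xW yW txy]]].
pose P := fun z => (z \in W) && [exists y in W, Tt z y].
have Px : P x by rewrite /P xW; apply/existsP; exists y; rewrite yW.
case: (arg_maxnP dist Px) => z /andP[zW /existsP[y0 /andP[y0W tzy0]]] zmax.
have key : forall y, y \in W -> Tt z y -> (z != r) && (y == par z).
  move=> w wW /orP[//|/andP[wr /eqP zp]].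
  have := zmax w; rewrite /P wW /=.
  have -> : [exists y in W, Tt w y] by apply/existsP; exists z; rewrite zW Tt_sym /Tt wr zp eqxx orbT.
  move=> /(_ isT); case/andP: (par_spec wr) => _; rewrite -zp => h1 h2.
  by move: (leq_trans h1 h2); rewrite ltnn.
exists z => //; apply/eqP/cards1P; exists y0; apply/setP => w; rewrite !inE.
apply/andP/eqP => [[wW tzw]|->]; last by [].
by case/andP: (key _ wW tzw) => _ /eqP ->; case/andP: (key _ y0W tzy0) => _ /eqP ->.
Qed.

Definition TE := [set p : 'I_n * 'I_n | (p.1 < p.2)%N && Tt p.1 p.2].

Lemma TE_card : (n.-1 <= #|TE|)%N.
Proof.
pose g (x : 'I_n) : 'I_n * 'I_n := if (x < par x)%N then (x, par x) else (par x, x).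
have gin : {in [set~ r], forall x, g x \in TE}.
  move=> x; rewrite !inE => xr; have /andP[exp _] := par_spec xr.
  have neq : (x : nat) != par x.
    by apply: contraTneq exp => /val_inj <-; rewrite eirr.
  rewrite /g; case: ifP => lt; first by rewrite /= lt /Tt xr eqxx.
  by rewrite /= ltn_neqAle eq_sym neq leqNgt lt /Tt eqxx xr orbT.
have ginj : {in [set~ r] &, injective g}.
  move=> x y; rewrite !inE => xr yr.
  have /andP[_ dx] := par_spec xr; have /andP[_ dy] := par_spec yr.
  rewrite /g; case: ifP => _; case: ifP => _ [] // h1 h2.
  by move: dx dy; rewrite -h1 h2 => a b; move: (ltn_trans a b); rewrite ltnn.
  by move: dx dy; rewrite h1 -h2 => a b; move: (ltn_trans a b); rewrite ltnn.
apply: leq_trans (_ : #|[set~ r]| <= _)%N; first by rewrite cardsC1 card_ord.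
rewrite -(card_in_imset ginj); apply: subset_leq_card.
by apply/subsetP => p /imsetP[x xD ->]; apply: gin.
Qed.

Definition Elt := [set p : 'I_n * 'I_n | (p.1 < p.2)%N && e p.1 p.2].
Definition NT := [set p : 'I_n * 'I_n | (p.1 < p.2)%N && e p.1 p.2 && ~~ Tt p.1 p.2].
Definition FF := [set p.1 | p in NT].

Lemma NT_card : (#|NT| + #|TE| = #|Elt|)%N.
Proof.
have sub : TE \subset Elt.
  by apply/subsetP => p; rewrite !inE => /andP[-> /Tt_e ->].
rewrite -(cardsID TE Elt) (setIidPr sub) addnC; congr (_ + _)%N.
by apply: eq_card => p; rewrite !inE; case: (p.1 < p.2)%N; rewrite /= ?andbF // andbC.
Qed.

Lemma eT x y : x \notin FF -> y \notin FF -> e x y = Tt x y.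
Proof.
move=> xF yF; apply/idP/idP => [exy|/Tt_e //].
case: (ltngtP x y) => [lt|gt|eq].
- apply/negPn/negP => nT; move/negP: xF; apply; apply/imsetP.
  by exists (x, y); rewrite // inE /= lt exy nT.
- rewrite Tt_sym; apply/negPn/negP => nT; move/negP: yF; apply; apply/imsetP.
  by exists (y, x); rewrite // inE /= gt esy exy nT.
- by move: exy; rewrite (val_inj eq) (negbTE (eirr _)).
Qed.

Lemma main_bound : (4 * n <= srU setT + 2 * alU setT + 2 * #|Elt| + 2)%N.
Proof.
have HF : forall W : {set 'I_n}, W \subset ~: FF ->
     (exists x y, [/\ x \in W, y \in W & e x y]) ->
     exists2 z, z \in W & #|[set y in W | e z y]| = 1%N.
  move=> W sW [x [y [xW yW exy]]].
  have nF w : w \in W -> w \notin FF by move=> /(subsetP sW); rewrite inE.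
  have [z zW cz] : exists2 z, z \in W & #|[set y in W | Tt z y]| = 1%N.
    by apply: Tt_forest; exists x, y; rewrite -eT ?nF.
  exists z => //; rewrite -cz; apply: eq_card => w; rewrite !inE.
  by case wW: (w \in W) => //=; rewrite eT ?nF.
have hF := forest_bound (~: FF) HF (~: FF) (subxx _).
have h1 := srU_sub (~: FF) setT (subsetT (~: FF)).
have h2 := alU_sub (~: FF) setT (subsetT (~: FF)).
have h3 := cardsC FF; rewrite card_ord in h3.
have h4 : (#|FF| <= #|NT|)%N by apply: leq_imset_card.
have h5 := NT_card.
have h6 := TE_card.
have h7 : (0 < n)%N by apply: leq_ltn_trans (ltn_ord r).
rewrite -subn1 in h6; move: hF; rewrite -[#|~: FF|](addKn #|FF|) h3 => hF; lia.
Qed.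

End Tree.
Lemma card_diag (S : {set 'I_n}) :
  #|[set p : 'I_n * 'I_n | (p.1 \in S) && (p.1 == p.2)]| = #|S|.
Proof.
have inj : injective (fun x : 'I_n => (x, x)) by move=> x y [].
rewrite -(card_imset S inj); apply: eq_card => -[a b]; rewrite inE /=.
apply/andP/imsetP => [[aS /eqP <-]|[x xS [-> ->]]]; first by exists a.
by rewrite xS eqxx.
Qed.

Definition InS (S : {set 'I_n}) :=
  [set p : 'I_n * 'I_n | (p.1 \in S) && (p.2 \in S) && (p.1 != p.2)].
Definition Off := [set p : 'I_n * 'I_n | p.1 != p.2].
Definition Eo := [set p : 'I_n * 'I_n | e p.1 p.2].

Lemma card_InS (S : {set 'I_n}) : (#|InS S| + #|S| = #|S| * #|S|)%N.
Proof.
rewrite -cardsX -(cardsID [set p : 'I_n * 'I_n | p.1 == p.2] (setX S S)) [RHS]addnC.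
congr (_ + _)%N.
  by apply: eq_card => -[a b]; rewrite !inE /= andbC.
rewrite -(card_diag S); apply: eq_card => -[a b]; rewrite !inE /=.
by case: eqP => [->|]; rewrite ?andbb ?andbF ?andbT.
Qed.

Lemma card_Off : (#|Off| + n = n * n)%N.
Proof.
have := card_InS setT; rewrite cardsT card_ord => <-; congr (_ + _)%N.
by apply: eq_card => -[a b]; rewrite !inE.
Qed.

Lemma card_Eo : #|Eo| = (2 * #|Elt|)%N.
Proof.
pose Lt := [set p : 'I_n * 'I_n | (p.1 < p.2)%N].
rewrite -(cardsID Lt Eo) mul2n -addnn; congr (_ + _)%N.
  by apply: eq_card => -[a b]; rewrite !inE /= andbC.
have inj : injective (fun p : 'I_n * 'I_n => (p.2, p.1)) by move=> [a b] [c d] [-> ->].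
rewrite -(card_imset Elt inj); apply: eq_card => -[a b]; rewrite !inE /=.
apply/andP/imsetP => [[nab eab]|[[c d] cd [-> ->]]].
  exists (b, a) => //; rewrite inE /= esy eab andbT.
  rewrite ltn_neqAle leqNgt nab andbT.
  by apply: contraTneq eab => /val_inj ->; rewrite eirr.
move: cd; rewrite inE /= => /andP[cd ecd]; rewrite esy ecd.
by rewrite -leqNgt ltnW.
Qed.

Lemma count_leqif (S : {set 'I_n}) : independent e S ->
  (#|Eo| + #|InS S| <= #|Off| ?= iff (Off \subset Eo :|: InS S))%N.
Proof.
move=> iS.
have dis : Eo :&: InS S = set0.
  apply/setP => -[a b]; rewrite !inE /=.
  by case eab: (e a b); rewrite // andbC; case: (boolP (a \in S)) => // aS; case: (boolP (b \in S)) => // bS; move/indepP: iS => /(_ a b aS bS); rewrite eab.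
have sub : Eo :|: InS S \subset Off.
  apply/subsetP => -[a b]; rewrite !inE /= => /orP[eab|/andP[_ //]].
  by apply: contraTneq eab => ->; rewrite (negbTE (eirr b)).
have -> : (#|Eo| + #|InS S| = #|Eo :|: InS S|)%N by rewrite cardsU dis cards0 subn0.
exact: subset_leqif_card.
Qed.

Lemma count_le (S : {set 'I_n}) : independent e S ->
  (2 * #|Elt| + #|S| * #|S| + n <= n * n + #|S|)%N.
Proof.
move=> iS; have := (count_leqif S iS).1.
have := card_Eo; have := card_InS S; have := card_Off; lia.
Qed.

Lemma count_eq (S : {set 'I_n}) : independent e S ->
  (2 * #|Elt| + #|S| * #|S| + n = n * n + #|S|)%N <->
  (forall x y, x != y -> ~~ ((x \in S) && (y \in S)) -> e x y).
Proof.
move=> iS; have [le eq] := count_leqif S iS.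
have h1 := card_Eo; have h2 := card_InS S; have h3 := card_Off.
split => H.
  have : (#|Eo| + #|InS S| == #|Off|)%N by apply/eqP; lia.
  rewrite eq => /subsetP sub x y xy nS.
  have := sub (x, y); rewrite !inE /= xy => /(_ isT) /orP[//|].
  by rewrite (negbTE nS).
have : Off \subset Eo :|: InS S.
  apply/subsetP => -[a b]; rewrite !inE /= => ab.
  case: (boolP ((a \in S) && (b \in S))) => [h|h]; first by rewrite ab orbT.
  by rewrite H.
rewrite -eq => /eqP; lia.
Qed.

Lemma srU_edge x y : e x y -> (2 <= srU setT)%N.
Proof.
move=> exy.
have xy : x != y by apply: contraTneq exy => ->; rewrite eirr.
have h := srU_pendant [set x; y] x y (set21 _ _) (set22 _ _) exy.
have : (srU [set x; y] <= srU setT)%N by apply: srU_sub; apply: subsetT.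
suff : (srU ([set x; y] :\ x :\ y) + 2 <= srU [set x; y])%N by lia.
apply: h => z; rewrite !inE => /orP[/eqP ->|/eqP -> //]; by rewrite (negbTE (eirr x)).
Qed.

Lemma srU_T : srU setT = skew_rank R o.
Proof.
rewrite /srU /skew_rank; congr (\rank _); apply/matrixP => i j.
by rewrite /AU mxE !inE /A unlock.
Qed.

Lemma alU_T : alU setT = alpha e.
Proof. by rewrite /alU /alpha; apply: eq_bigl => S; rewrite subsetT. Qed.

Lemma AU_T : AU setT = A.
Proof. by apply/matrixP => i j; rewrite /AU mxE !inE. Qed.

Lemma rank_star c : (forall x y, e x y -> (x == c) || (y == c)) -> (srU setT <= 2)%N.
Proof.
move=> Hc; rewrite /srU AU_T.
pose u : 'cV[R]_n := \col_i ((i == c)%:R).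
pose w : 'rV[R]_n := \row_j ((j == c)%:R).
have -> : A = u *m row c A + col c A *m w.
  apply/matrixP => i j; rewrite [RHS]mxE !mxE !big_ord1 !mxE.
  case: (eqVneq i c) => [->|ic]; case: (eqVneq j c) => [->|jc];
    rewrite ?A_diag ?mulr1 ?mul1r ?mulr0 ?mul0r ?addr0 ?add0r //.
  apply/eqP; rewrite A_eq0; apply/negP => /Hc; by rewrite (negbTE ic) (negbTE jc).
apply: leq_trans (mxrank_add _ _) _.
have h1 : (\rank (u *m row c A) <= 1)%N by apply: leq_trans (mxrankM_maxl _ _) (rank_leq_col _).
have h2 : (\rank (col c A *m w) <= 1)%N by apply: leq_trans (mxrankM_maxr _ _) (rank_leq_row _).
by rewrite -[2%N]/(1 + 1)%N leq_add.
Qed.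

Lemma rank_odd : odd n -> (srU setT < n)%N.
Proof.
move=> on; rewrite /srU AU_T.
have dA : \det A = 0.
  have h : A^T = (-1) *: A by apply/matrixP => i j; rewrite !mxE A_anti mulN1r.
  have := det_tr A; rewrite h detZ -signr_odd on expr1 mulN1r => h2.
  lra.
rewrite ltn_neqAle rank_leq_row andbT.
apply/negP => /eqP rA.
have : row_free A by rewrite /row_free rA.
by rewrite row_free_unit unitmxE unitfE dA eqxx.
Qed.

Lemma edge_of_conn (Hconn : connected_graph e) (x y : 'I_n) : x != y -> exists u v, e u v.
Proof.
move=> xy; move/connectP: (Hconn x y) => [p pp yl].
case: p pp yl => [|z p] /=; first by move=> _ yx; move: xy; rewrite yx eqxx.
by move=> /andP[exz _] _; exists x, z.
Qed.

Lemma alU_le_n : (alU setT <= n)%N.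
Proof. by apply/bigmax_leqP => S _; apply: leq_trans (max_card _) _; rewrite card_ord. Qed.

Lemma alU_ge1 (x : 'I_n) : (1 <= alU setT)%N.
Proof.
rewrite -(cards1 x); apply: alU_ge; first exact: subsetT.
by apply/indepP => a b; rewrite !inE => /eqP -> /eqP ->.
Qed.

Lemma star_of_iso (n0 : (0 < n)%N) : graph_iso e (@star_rel n) ->
  exists c, forall x y, e x y = (x != y) && ((x == c) || (y == c)).
Proof.
move=> [f [[g fK gK] Hf]]; pose z := Ordinal n0; exists (g z) => x y.
have fz w : (val (f w) == 0%N) = (w == g z).
  apply/eqP/eqP => [h|->]; last by rewrite gK.
  by rewrite -(fK w); congr g; apply: val_inj.
by rewrite Hf /star_rel (inj_eq (can_inj fK)) !fz.
Qed.

Lemma iso_star_of (n0 : (0 < n)%N) (c : 'I_n) :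
  (forall x y, e x y = (x != y) && ((x == c) || (y == c))) -> graph_iso e (@star_rel n).
Proof.
move=> Hc; pose z := Ordinal n0.
pose f x := if x == c then z else if x == z then c else x.
have fK : involutive f.
  move=> x; rewrite /f; case: (eqVneq x c) => [->|xc]; first by rewrite eqxx; case: eqP.
  case: (eqVneq x z) => [->|xz]; first by rewrite eqxx.
  by rewrite (negbTE xc) (negbTE xz).
have fz w : (val (f w) == 0%N) = (w == c).
  rewrite /f; case: (eqVneq w c) => [_|wc] //=.
  case: (eqVneq w z) => [wz|wz].
    apply/negP => /eqP h; have cz : c = z by apply: val_inj.
    by move: wc; rewrite wz cz eqxx.
  apply/negP => /eqP h; have wz' : w = z by apply: val_inj.
  by move: wz; rewrite wz' eqxx.
exists f; split; first by exists f.
by move=> x y; rewrite Hc /star_rel (inj_eq (inv_inj fK)) !fz.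
Qed.

Lemma tri_of_iso : graph_iso e triangle_rel -> n = 3%N /\ forall x y, e x y = (x != y).
Proof.
move=> [f [fb Hf]]; split; first by rewrite -[n]card_ord (bij_eq_card fb) card_ord.
by move=> x y; rewrite Hf /triangle_rel (inj_eq (bij_inj fb)).
Qed.

Lemma iso_tri_of (H3 : n = 3%N) : (forall x y, e x y = (x != y)) -> graph_iso e triangle_rel.
Proof.
move=> He; exists (cast_ord H3); split.
  by exists (cast_ord (esym H3)); [apply: cast_ordK | apply: cast_ordKV].
by move=> x y; rewrite He /triangle_rel (inj_eq (@cast_ord_inj _ _ H3)).
Qed.

Lemma Eo_pos x y : e x y -> (1 <= #|Elt|)%N.
Proof.
move=> exy; have : (0 < #|Eo|)%N by apply/card_gt0P; exists (x, y); rewrite inE.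
rewrite card_Eo; lia.
Qed.

Lemma final (n0 : (0 < n)%N) (Hconn : connected_graph e) :
  let m := num_edges e in
  let lhs := (skew_rank R o)%:R / (alpha e)%:R : R in
  let rhs := 4 * (2 * n%:R - m%:R - 1) /
             (Num.sqrt (4 * n%:R * (n%:R - 1) - 8 * m%:R + 1) + 1) - 2 : R in
  rhs <= lhs /\
  (lhs = rhs <-> graph_iso e (@star_rel n) \/ graph_iso e triangle_rel).
Proof.
move=> m lhs rhs.
pose z := Ordinal n0.
have Em : #|Elt| = m by [].
have [S [_ iS cS]] := alU_wit setT.
rewrite alU_T in cS.
have a1 : (1 <= alpha e)%N by rewrite -alU_T; apply: alU_ge1 z.
have F1 := count_le S iS; rewrite cS Em in F1.
have F2 := main_bound z Hconn; rewrite srU_T alU_T Em in F2.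
have a1r : 1 <= (alpha e)%:R :> R by rewrite ler1n.
have s0 : 0 <= (skew_rank R o)%:R :> R by rewrite ler0n.
have F1r : 2 * m%:R + (alpha e)%:R ^+ 2 + n%:R <= n%:R ^+ 2 + (alpha e)%:R :> R.
  by move: F1; rewrite -(ler_nat R) !natrD !natrM !expr2 => h; lra.
have F2r : 4 * n%:R <= (skew_rank R o)%:R + 2 * (alpha e)%:R + 2 * m%:R + 2 :> R.
  by move: F2; rewrite -(ler_nat R) !natrD ?natrM => h; lra.
have [Hle Heq] := real_main _ _ _ _ _ a1r s0 F1r F2r.
split; first exact: Hle.
have toE1 : (2 * m + alpha e * alpha e + n = n * n + alpha e)%N ->
    2 * m%:R + (alpha e)%:R ^+ 2 + n%:R = n%:R ^+ 2 + (alpha e)%:R :> R.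
  by move=> /(congr1 (fun k => k%:R : R)); rewrite !natrD ?natrM !expr2 => h; lra.
have toE2 : (skew_rank R o + 2 * alpha e + 2 * m + 2 = 4 * n)%N ->
    (skew_rank R o)%:R + 2 * (alpha e)%:R + 2 * m%:R + 2 = 4 * n%:R :> R.
  by move=> /(congr1 (fun k => k%:R : R)); rewrite !natrD ?natrM => h; lra.
have all1 : n = 1%N -> forall x y : 'I_n, x = y.
  move=> n1 x y; apply: ord_inj; have := ltn_ord x; have := ltn_ord y; lia.
have edge2 : (1 < n)%N -> exists u v, e u v.
  move=> n2; apply: (edge_of_conn Hconn z (Ordinal n2)).
  by rewrite -val_eqE.
split.
  move=> H; have [E1r E2r] := Heq H.
  have E1 : (2 * m + alpha e * alpha e + n = n * n + alpha e)%N.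
    apply/eqP; rewrite -(eqr_nat R) !natrD ?natrM; apply/eqP.
    by move: E1r; rewrite !expr2 => h; lra.
  have E2 : (skew_rank R o + 2 * alpha e + 2 * m + 2 = 4 * n)%N.
    apply/eqP; rewrite -(eqr_nat R) !natrD ?natrM; apply/eqP.
    by move: E2r => h; lra.
  case: (eqVneq n 1%N) => [n1|n1].
    left; apply: (iso_star_of n0 z) => x y.
    by rewrite (all1 n1 x y) (negbTE (eirr y)) eqxx.
  have n2 : (1 < n)%N by lia.
  have [u [v euv]] := edge2 n2.
  have sr2 := srU_edge u v euv; rewrite srU_T in sr2.
  have m1 := Eo_pos u v euv; rewrite Em in m1.
  have al_n := alU_le_n; rewrite alU_T in al_n.
  have Hall : forall x y, x != y -> ~~ ((x \in S) && (y \in S)) -> e x y.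
    by apply/(count_eq S iS); rewrite cS Em.
  have cases : (alpha e + 1 = n)%N \/ (n = 3 /\ alpha e = 1)%N by nia.
  case: cases => [an | [n3 a_1]].
    left.
    have c1 : #|~: S| = 1%N by have := cardsC S; rewrite card_ord cS; lia.
    have /cards1P [c Sc] : #|~: S| == 1%N by apply/eqP.
    have inS w : (w \in S) = (w != c).
      by have := congr1 (fun A : {set 'I_n} => w \in A) Sc; rewrite /= !inE => <-; rewrite negbK.
    apply: (iso_star_of n0 c) => x y; apply/idP/idP.
      move=> exy; rewrite (_ : x != y); last by apply: contraTneq exy => ->; rewrite eirr.
      apply/negPn/negP; rewrite negb_or => /andP[xc yc].
      by move/indepP: iS => /(_ x y); rewrite !inS xc yc exy => /(_ isT isT).
    case/andP => xy cxy; apply: Hall => //; rewrite !inS negb_and !negbK.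
    exact: cxy.
  right; apply: (iso_tri_of n3) => x y; apply/idP/idP.
    by move=> exy; apply: contraTneq exy => ->; rewrite eirr.
  move=> xy; apply: Hall => //; apply/negP => /andP[xS yS].
  have c1 : #|S| = 1%N by rewrite cS.
  have /cards1P [c Sc] : #|S| == 1%N by apply/eqP.
  by move: xS yS xy; rewrite Sc !inE => /eqP -> /eqP ->; rewrite eqxx.
move=> Hiso.
suff [E1 E2] : (2 * m + alpha e * alpha e + n = n * n + alpha e)%N /\
               (skew_rank R o + 2 * alpha e + 2 * m + 2 = 4 * n)%N.
  by apply: real_conv a1r (toE1 E1) (toE2 E2).
have al_n := alU_le_n; rewrite alU_T in al_n.
have HS := count_le S iS; rewrite cS Em in HS.
case: Hiso => [Hs|Ht].
  have [c Hc] := star_of_iso n0 Hs.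
  case: (eqVneq n 1%N) => [n1|n1].
    have m0 : m = 0%N.
      rewrite -Em; apply/eqP; rewrite cards_eq0; apply/eqP/setP => p; rewrite !inE.
      by rewrite (all1 n1 p.1 p.2) (negbTE (eirr _)) andbF.
    have s0' : (skew_rank R o < 1)%N by rewrite -srU_T -[X in (_ < X)%N]n1; apply: rank_odd; rewrite n1.
    lia.
  have n2 : (1 < n)%N by lia.
  have [u [v euv]] := edge2 n2.
  have sr2 := srU_edge u v euv; rewrite srU_T in sr2.
  have sr2' : (skew_rank R o <= 2)%N.
    rewrite -srU_T; apply: (rank_star c) => x y; rewrite Hc => /andP[].
    by [].
  have iS' : independent e (~: [set c]).
    by apply/indepP => x y; rewrite !inE => xc yc; rewrite Hc (negbTE xc) (negbTE yc) andbF.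
  have cS' : #|~: [set c]| = n.-1 by rewrite cardsC1 card_ord.
  have := alU_ge setT (~: [set c]) (subsetT _) iS'; rewrite alU_T cS' => aln.
  have := proj2 (count_eq (~: [set c]) iS'); rewrite cS' Em => H.
  have E : (2 * m + n.-1 * n.-1 + n = n * n + n.-1)%N.
    apply: H => x y xy; rewrite !inE negb_and !negbK => cxy.
    by rewrite Hc xy.
  rewrite -subn1 in E aln; nia.
have [n3 He] := tri_of_iso Ht.
have iS' : independent e [set z].
  by apply/indepP => x y; rewrite !inE => /eqP -> /eqP ->; apply: eirr.
have := proj2 (count_eq [set z] iS'); rewrite cards1 Em => H.
have E : (2 * m + 1 * 1 + n = n * n + 1)%N.
  by apply: H => x y xy _; rewrite He.
have [u [v euv]] := edge2 (ltac:(lia)).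
have sr2 := srU_edge u v euv; rewrite srU_T in sr2.
have s3 : (skew_rank R o < 3)%N by rewrite -srU_T -n3; apply: rank_odd; rewrite n3.
nia.
Qed.

End Main.

Theorem theorem1p6 (R : rcfType) (n : nat) (e o : rel 'I_n) :
  (0 < n)%N -> simple_graph e -> connected_graph e -> orientation e o ->
  let m := num_edges e in
  let lhs := (skew_rank R o)%:R / (alpha e)%:R : R in
  let rhs := 4 * (2 * n%:R - m%:R - 1) /
             (Num.sqrt (4 * n%:R * (n%:R - 1) - 8 * m%:R + 1) + 1) - 2 : R in
  rhs <= lhs /\
  (lhs = rhs <-> graph_iso e (@star_rel n) \/ graph_iso e triangle_rel).
Proof.
move=> n0 [eirr esy] Hconn Hor.
exact: (@final R n e o eirr esy Hor n0 Hconn).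
Qed.
Print Assumptions theorem1p6.
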